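(* Let $g\in C^1$ be a Riemannian metric on $\mathbb{R}^D$ written as $g_x(u,u)=u^{\top}H(x)u$, with $\|H(x)-H(y)\|_{\mathcal{B}}\le L_H\|x-y\|_2$ for all $x,y$. Let $N\ge1$, $\gamma^{\mathrm{p}}\in\mathcal{C}^N_{\mathrm{p}}$, and $K_3^2:=\frac1N\sum_{n=0}^{N-1}\|\beta^{\mathrm{p}}(t_n)\|_2^2$. Then $$\left|\mathcal{E}^g(\gamma^{\mathrm{pl}})-\mathcal{E}^g_{\mathrm{l},N}(\gamma^{\mathrm{p}})\right|\le\frac{L_HK_3^3}{2N^{1/2}}.$$
   Context: $t_n=n/N$, $h=1/N$; $\mathcal{C}^N_{\mathrm{p}}$ is the set of maps $\gamma^{\mathrm{p}}:\{t_0,\dots,t_N\}\to\mathbb{R}^D$; $\beta^{\mathrm{p}}(t_n)=(\gamma^{\mathrm{p}}(t_{n+1})-\gamma^{\mathrm{p}}(t_n))/h$; $\gamma^{\mathrm{pl}}(t_n+s)=(1-Ns)\gamma^{\mathrm{p}}(t_n)+Ns\gamma^{\mathrm{p}}(t_{n+1})$ for $0\le s\le h$; $\mathcal{E}^g(\gamma)=\int_0^1 g_{\gamma(t)}(\dot\gamma,\dot\gamma)dt$; $\mathcal{E}^g_{\mathrm{l},N}(\gamma^{\mathrm{p}})=\frac1N\sum_{n=0}^{N-1}g_{\gamma^{\mathrm{p}}(t_n)}(\beta^{\mathrm{p}}(t_n),\beta^{\mathrm{p}}(t_n))$. $\|\cdot\|_{\mathcal{B}}$ is the operator norm. *)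

(* Defs.v *)
From HB Require Import structures.
From mathcomp Require Import all_boot all_order all_algebra.
From mathcomp Require Import all_classical all_reals all_analysis.
Set Implicit Arguments. Unset Strict Implicit. Unset Printing Implicit Defensive.
Import Order.TTheory GRing.Theory Num.Theory.
Import numFieldNormedType.Exports.
Local Open Scope classical_set_scope.
Local Open Scope ring_scope.

Section Defs.
Variables (R : realType) (D : nat).

Definition norm2 (v : 'cV[R]_D) : R := Num.sqrt (\sum_(i < D) v i 0 ^+ 2).

Definition opnorm (A : 'M[R]_D) : R :=
  sup [set norm2 (A *m u) | u in [set u : 'cV[R]_D | norm2 u <= 1]].

Definition quadform (H : 'M[R]_D) (u : 'cV[R]_D) : R := (u^T *m H *m u) 0 0.

Definition metric (H : 'cV[R]_D -> 'M[R]_D) (x u : 'cV[R]_D) : R :=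
  quadform (H x) u.

Definition energy (H : 'cV[R]_D -> 'M[R]_D) (gam : R -> 'cV[R]_D) : R :=
  Rintegral (@lebesgue_measure R) `[0%R, 1%R]
    (fun t : R => metric H (gam t) (derive1 gam t)).

Definition tn (N n : nat) : R := n%:R / N%:R.

(* beta^p(t_n) = (gamma^p(t_{n+1}) - gamma^p(t_n)) / h, h = 1/N *)
Definition beta (N : nat) (gp : nat -> 'cV[R]_D) (n : nat) : 'cV[R]_D :=
  N%:R *: (gp n.+1 - gp n).

(* index n of the segment [t_n, t_{n+1}] containing t (clamped to N-1) *)
Definition seg (N : nat) (t : R) : nat := minn (Num.truncn (t * N%:R)) N.-1.

Definition gpl (N : nat) (gp : nat -> 'cV[R]_D) (t : R) : 'cV[R]_D :=
  let n := seg N t in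
  let s := t - tn N n in
  (1 - N%:R * s) *: gp n + (N%:R * s) *: gp n.+1.

Definition energy_l (H : 'cV[R]_D -> 'M[R]_D) (N : nat) (gp : nat -> 'cV[R]_D) : R :=
  N%:R^-1 * \sum_(0 <= n < N) metric H (gp n) (beta N gp n).

End Defs.

(* Main.v *)
Require Import Defs.
From HB Require Import structures.
From mathcomp Require Import all_boot all_order all_algebra.
From mathcomp Require Import all_classical all_reals all_analysis.
From mathcomp Require Import measurable_realfun lebesgue_measure lebesgue_integral.
From mathcomp Require Import ring lra.
Import Order.TTheory GRing.Theory Num.Theory.
Import numFieldNormedType.Exports.
Local Open Scope classical_set_scope.
Local Open Scope ring_scope.

Set Implicit Arguments. Unset Strict Implicit.
Section LA.
Variables (R : realType) (D : nat).

Lemma cs_sum (a b : 'I_D -> R) :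
  (\sum_i a i * b i) ^+ 2 <= (\sum_i a i ^+ 2) * (\sum_i b i ^+ 2).
Proof.
set A := \sum_i a i ^+ 2; set B := \sum_i b i ^+ 2; set S := \sum_i a i * b i.
have E t : \sum_i (a i * t + b i) ^+ 2 = t ^+ 2 * A + 2 * t * S + B.
  rewrite /A /B /S !mulr_sumr -!big_split /=; apply: eq_bigr => i _; ring.
have A0 : 0 <= A by apply: sumr_ge0 => i _; exact: sqr_ge0.
have B0 : 0 <= B by apply: sumr_ge0 => i _; exact: sqr_ge0.
have [Az|Ap] := eqVneq A 0.
  have ai i : a i = 0.
    apply/eqP; rewrite -sqrf_eq0; apply/eqP.
    exact: (psumr_eq0P (fun i _ => sqr_ge0 (a i)) Az).
  rewrite /S big1 ?expr0n /= ?Az ?mul0r // => i _; by rewrite ai mul0r.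
have Apos : 0 < A by rewrite lt_def Ap A0.
have := E (- S / A).
have -> : (- S / A) ^+ 2 * A + 2 * (- S / A) * S + B = B - S ^+ 2 / A.
  by field.
move=> E2.
have : 0 <= B - S ^+ 2 / A.
  by rewrite -E2; apply: sumr_ge0 => i _; exact: sqr_ge0.
rewrite subr_ge0 ler_pdivrMr // => h.
by rewrite mulrC.
Qed.

Implicit Types u w : 'cV[R]_D.
Definition dot (u w : 'cV[R]_D) := \sum_i u i 0 * w i 0.

Lemma norm2_ge0 u : 0 <= norm2 u.
Proof. exact: sqrtr_ge0. Qed.

Lemma norm2_sq u : norm2 u ^+ 2 = \sum_i u i 0 ^+ 2.
Proof. by rewrite /norm2 sqr_sqrtr //; apply: sumr_ge0 => i _; exact: sqr_ge0. Qed.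

Lemma dot_le u w : `|dot u w| <= norm2 u * norm2 w.
Proof.
rewrite -[`|_|]sqrtr_sqr /norm2 -sqrtrM; last by apply: sumr_ge0 => i _; exact: sqr_ge0.
exact/ler_wsqrtr/cs_sum.
Qed.

Lemma dotE u w : (u^T *m w) 0 0 = dot u w.
Proof. by rewrite !mxE; apply: eq_bigr => i _; rewrite !mxE. Qed.

Lemma norm2Z c u : norm2 (c *: u) = `|c| * norm2 u.
Proof.
rewrite /norm2 -sqrtr_sqr -sqrtrM ?sqr_ge0 //; congr Num.sqrt.
rewrite mulr_sumr; apply: eq_bigr => i _; rewrite !mxE; ring.
Qed.

Lemma norm2_eq0 u : norm2 u = 0 -> u = 0.
Proof.
move=> h; have h2 : \sum_i u i 0 ^+ 2 = 0 by rewrite -norm2_sq h expr0n.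
apply/matrixP => i j; rewrite (ord1 j) mxE; apply/eqP; rewrite -sqrf_eq0; apply/eqP.
exact: (psumr_eq0P (fun i _ => sqr_ge0 (u i 0)) h2).
Qed.

Lemma norm2_0 : norm2 (0 : 'cV[R]_D) = 0.
Proof. by rewrite /norm2 big1 ?sqrtr0 // => i _; rewrite mxE expr0n. Qed.

Lemma mx_bound (A : 'M[R]_D) u :
  norm2 (A *m u) <= Num.sqrt (\sum_i \sum_j A i j ^+ 2) * norm2 u.
Proof.
rewrite /norm2 -sqrtrM; last by apply: sumr_ge0 => i _; apply: sumr_ge0 => j _; exact: sqr_ge0.
apply: ler_wsqrtr; rewrite mulr_suml; apply: ler_sum => i _.
rewrite !mxE.
exact: (cs_sum (fun j => A i j) (fun j => u j 0)).
Qed.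

Lemma opnorm_ub (A : 'M[R]_D) u : norm2 u <= 1 -> norm2 (A *m u) <= opnorm A.
Proof.
move=> hu; apply: sup_upper_bound; last by exists u.
split; first by exists (norm2 (A *m u)), u.
exists (Num.sqrt (\sum_i \sum_j A i j ^+ 2)) => _ [v hv <-].
apply: (le_trans (mx_bound A v)).
by rewrite -[X in _ <= X]mulr1 ler_wpM2l ?sqrtr_ge0.
Qed.

Lemma opnorm_le (A : 'M[R]_D) u : norm2 (A *m u) <= opnorm A * norm2 u.
Proof.
have [u0|un0] := eqVneq (norm2 u) 0.
  by rewrite u0 (norm2_eq0 u0) mulmx0 norm2_0 mulr0.
have up : 0 < norm2 u by rewrite lt_def un0 norm2_ge0.
have := opnorm_ub A (u:=(norm2 u)^-1 *: u).
rewrite norm2Z ger0_norm ?invr_ge0 ?norm2_ge0 // mulVf // lexx => /(_ isT).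
rewrite -scalemxAr norm2Z ger0_norm ?invr_ge0 ?norm2_ge0 //.
by rewrite mulrC ler_pdivrMr.

Qed.

Lemma quad_le (A : 'M[R]_D) u : `|quadform A u| <= opnorm A * norm2 u ^+ 2.
Proof.
rewrite /quadform -mulmxA dotE (le_trans (dot_le _ _)) //.
rewrite mulrC expr2 mulrA ler_wpM2r ?norm2_ge0 //.
exact: opnorm_le.
Qed.

Lemma quadB (A B : 'M[R]_D) u : quadform A u - quadform B u = quadform (A - B) u.
Proof. by rewrite /quadform mulmxBr mulmxBl !mxE. Qed.

End LA.

Section AN.
Variable R : realType.
Notation mu := (@lebesgue_measure R).

Lemma integrableU d (T : measurableType d) (nu : {measure set T -> \bar R})
  (A B : set T) (f : T -> \bar R) : measurable A -> measurable B ->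
  [disjoint A & B] ->
  nu.-integrable A f -> nu.-integrable B f -> nu.-integrable (A `|` B) f.
Proof.
move=> mA mB AB /integrableP[mfA iA] /integrableP[mfB iB].
have mf : measurable_fun (A `|` B) f by apply/measurable_funU.
apply/integrableP; split => //.
rewrite integral_setU //; first exact: lte_add_pinfty.
exact: measurableT_comp.
Qed.

Lemma integrable1 (b : R) (f : R -> R) : mu.-integrable [set b] (EFin \o f).
Proof.
apply/integrableP; split; first exact: measurable_fun_set1.
by rewrite integral_set1.
Qed.

Lemma cont_int (a b : R) (g : R -> R) : continuous g ->
  mu.-integrable `[a, b] (EFin \o g).
Proof.
move=> cg; apply: continuous_compact_integrable; first exact: segment_compact.
exact: continuous_subspaceT.
Qed.

Lemma isd_sq (a x : R) : is_derive x 1 (fun t : R => (t - a) ^+ 2 / 2) (x - a).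
Proof.
apply: is_derive_eq.
rewrite !(scaler0, subr0, add0r) !scaler1 -mulr2n -mulr_natr.
by rewrite /GRing.scale /=; field.
Qed.

Lemma int_lin (a b : R) : a < b ->
  \int[mu]_(t in `[a, b]) (t - a) = (b - a) ^+ 2 / 2.
Proof.
move=> ab.
have dF x : derivable (fun t : R => (t - a) ^+ 2 / 2) x 1.
  by have := isd_sq a x => -[].
have cF : continuous (fun t : R => (t - a) ^+ 2 / 2).
  by move=> x; apply: differentiable_continuous; apply/derivable1_diffP.
rewrite /Rintegral.
rewrite (@continuous_FTC2 _ _ (fun t => (t - a) ^+ 2 / 2) a b ab).
- by rewrite subrr expr0n /= mul0r subr0.
- apply: continuous_subspaceT => x.
  apply: continuousB; [exact: cvg_id | exact: cvg_cst].
- split.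
  + by move=> x _; exact: dF.
  + exact: cvg_at_right_filter (cF a).
  + exact: cvg_at_left_filter (cF b).
- move=> x _; rewrite derive1E.
  by have := isd_sq a x => -[_ ->].
Qed.
End AN.

Section Core.
Variables (R : realType) (D : nat) (N : nat) (gp : nat -> 'cV[R]_D).
Hypothesis N0 : (0 < N)%N.

Lemma N_gt0 : 0 < N%:R :> R.
Proof. by rewrite ltr0n. Qed.

Lemma tn_lt n : tn R N n < tn R N n.+1.
Proof.
by rewrite /tn ltr_pM2r ?invr_gt0 ?N_gt0 // ltr_nat.
Qed.

Lemma tnS n : tn R N n.+1 - tn R N n = N%:R^-1.
Proof. by rewrite /tn -mulrBl -natrB // subSnn mul1r. Qed.

Lemma seg_eq n t : (n < N)%N -> tn R N n <= t < tn R N n.+1 -> seg N t = n.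
Proof.
move=> nN /andP[h1 h2]; rewrite /seg.
have Np := N_gt0.
have t0 : 0 <= t * N%:R.
  apply: mulr_ge0; last exact: ltW.
  by apply: le_trans h1; rewrite /tn divr_ge0.
have /eqP -> : Num.truncn (t * N%:R) == n.
  rewrite truncn_eq // -!ler_pdivrMr // -!ltr_pdivlMr //.
  by rewrite -/(tn R N n) h1 /= -/(tn R N n.+1).
apply/minn_idPl; by rewrite -ltnS prednK.
Qed.

Lemma gpl_eq n t : (n < N)%N -> tn R N n <= t < tn R N n.+1 ->
  gpl N gp t = gp n + (t - tn R N n) *: beta N gp n.
Proof.
move=> nN ht; rewrite /gpl (seg_eq nN ht) /beta.
apply/matrixP => i j; rewrite !mxE; ring.
Qed.


Lemma derive_gpl n t : (n < N)%N -> tn R N n < t < tn R N n.+1 ->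
  derive1 (gpl N gp) t = beta N gp n.
Proof.
move=> nN /andP[h1 h2].
set e := Num.min (t - tn R N n) (tn R N n.+1 - t).
have e0 : 0 < e by rewrite lt_min !subr_gt0 h1 h2.
rewrite /derive1; apply: cvg_lim => //; apply: cvg_near_cst.
near=> h.
have hne : h != 0 by near: h; exact: nbhs_dnbhs_neq.
have hlt : `|h| < e by near: h; exact: dnbhs0_lt.
have [he1 he2] : `|h| < t - tn R N n /\ `|h| < tn R N n.+1 - t.
  by move: hlt; rewrite lt_min => /andP[].
have ht1 : tn R N n <= h + t < tn R N n.+1.
  move: he1 he2; rewrite !ltr_norml => /andP[? ?] /andP[? ?].
  apply/andP; split; lra.
have ht2 : tn R N n <= t < tn R N n.+1 by rewrite (ltW h1) h2.
rewrite (gpl_eq nN ht1) (gpl_eq nN ht2).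
have -> : gp n + (h + t - tn R N n) *: beta N gp n - (gp n + (t - tn R N n) *: beta N gp n)
   = h *: beta N gp n.
  by apply/matrixP => i j; rewrite !mxE; ring.
by rewrite scalerA mulVf // scale1r.
Unshelve. all: by end_near.
Qed.

End Core.

Section Core2.
Variables (R : realType) (D : nat) (N : nat) (gp : nat -> 'cV[R]_D).
Variables (H : 'cV[R]_D -> 'M[R]_D) (LH : R).
Hypothesis HLip : forall x y, opnorm (H x - H y) <= LH * norm2 (x - y).

Definition fseg n t := quadform (H (gp n + (t - tn R N n) *: beta N gp n)) (beta N gp n).

Lemma quad_lip x y u :
  `|quadform (H x) u - quadform (H y) u| <= LH * norm2 (x - y) * norm2 u ^+ 2.
Proof.
rewrite quadB; apply: le_trans (quad_le _ _) _.
by rewrite ler_wpM2r ?exprn_ge0 ?norm2_ge0.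
Qed.

Lemma fseg_lip n s t :
  `|fseg n s - fseg n t| <= `|LH| * norm2 (beta N gp n) ^+ 3 * `|s - t|.
Proof.
apply: le_trans (quad_lip _ _ _) _.
have -> : gp n + (s - tn R N n) *: beta N gp n - (gp n + (t - tn R N n) *: beta N gp n)
   = (s - t) *: beta N gp n.
  by apply/matrixP => i j; rewrite !mxE; ring.
rewrite norm2Z.
have -> : LH * (`|s - t| * norm2 (beta N gp n)) * norm2 (beta N gp n) ^+ 2 =
  LH * (norm2 (beta N gp n) ^+ 3 * `|s - t|) by ring.
rewrite -mulrA ler_wpM2r ?ler_norm // mulr_ge0 ?exprn_ge0 ?norm2_ge0 //.
Qed.

Lemma fseg_cont n : continuous (fseg n).
Proof.
move=> s; apply/cvgrPdist_le => eps e0.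
set K := `|LH| * norm2 (beta N gp n) ^+ 3 + 1.
have K0 : 0 < K by rewrite /K ltr_pwDr // mulr_ge0 ?exprn_ge0 ?norm2_ge0.
near=> t.
have ht : `|s - t| < eps / K.
  near: t; apply: (@cvgr_dist_lt _ _ _ _ _ (fun t => t) s); last by rewrite divr_gt0.
  exact: cvg_id.
apply: le_trans (fseg_lip n s t) _.
apply: (@le_trans _ _ (K * `|s - t|)).
  by rewrite ler_wpM2r // /K lerDl.
by rewrite -ler_pdivlMl // mulrC ltW.
Unshelve. all: by end_near.
Qed.


Hypothesis N0 : (0 < N)%N.
Notation mu := (@lebesgue_measure R).

Definition Fint t := metric H (gpl N gp t) (derive1 (gpl N gp) t).

Lemma F_eq n t : (n < N)%N -> tn R N n < t < tn R N n.+1 -> Fint t = fseg n t.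
Proof.
move=> nN /andP[h1 h2]; rewrite /Fint /metric (derive_gpl gp N0 nN) ?h1 ?h2 //.
by rewrite (gpl_eq gp N0 nN) ?(ltW h1) ?h2.
Qed.

Lemma seg_int n : (n < N)%N ->
  mu.-integrable `]tn R N n, tn R N n.+1] (EFin \o Fint) /\
  \int[mu]_(t in `]tn R N n, tn R N n.+1]) Fint t =
  \int[mu]_(t in `[tn R N n, tn R N n.+1]) fseg n t.
Proof.
move=> nN.
set a := tn R N n; set b := tn R N n.+1.
have ab : a < b by exact: tn_lt.
have E : `]a, b]%classic = `]a, b[%classic `|` [set b].
  by rewrite (@setUitv1 _ _ (BRight a) b true) // bnd_simp.
have iab : mu.-integrable `[a, b] (EFin \o fseg n) by apply: cont_int; exact: fseg_cont.
have ioo : mu.-integrable `]a, b[ (EFin \o fseg n).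
  by apply: integrableS iab => //; exact: subset_itv_oo_cc.
have ioc : mu.-integrable `]a, b] (EFin \o fseg n).
  by apply: integrableS iab => //; exact: subset_itv_oc_cc.
have eqF : {in `]a, b[%classic, fseg n =1 Fint}.
  by move=> x; rewrite inE /= in_itv /= => hx; rewrite (F_eq nN hx).
have iF : mu.-integrable `]a, b[ (EFin \o Fint).
  move: ioo; apply: eq_integrable => // x hx /=; by rewrite eqF.
have dj : [disjoint `]a, b[ & [set b]].
  rewrite /disj_set; apply/eqP/seteqP; split => x //= [].
  by rewrite in_itv /= => /andP[_ xb] xe; rewrite xe ltxx in xb.
have iU : mu.-integrable (`]a, b[ `|` [set b]) (EFin \o Fint).
  apply: integrableU => //; exact: integrable1.
split; first by rewrite E.
rewrite E Rintegral_setU //.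
rewrite Rintegral_set1 addr0.
rewrite -(eq_Rintegral (@lebesgue_measure R) eqF) Rintegral_itv_bndo_bndc // Rintegral_itv_obnd_cbnd //.
Qed.


Lemma seg_bound n : (n < N)%N ->
  `|\int[mu]_(t in `[tn R N n, tn R N n.+1]) fseg n t -
     N%:R^-1 * quadform (H (gp n)) (beta N gp n)|
  <= LH * norm2 (beta N gp n) ^+ 3 * (N%:R^-1 ^+ 2 / 2).
Proof.
move=> nN.
set a := tn R N n; set b := tn R N n.+1.
set c := quadform (H (gp n)) (beta N gp n).
set m := norm2 (beta N gp n).
have ab : a < b by exact: tn_lt.
have ba : b - a = N%:R^-1 by exact: tnS.
have mab : measurable `[a, b]%classic by [].
have cc : continuous (fun _ : R => c) by move=> x; exact: cvg_cst.
have cf : continuous (fseg n) by exact: fseg_cont.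
have -> : N%:R^-1 * c = \int[mu]_(t in `[a, b]) c.
  rewrite Rintegral_cst //; have := lebesgue_measure_itv `[a, b]; rewrite /= lte_fin ab /= => ->.
  by rewrite -EFinD /= ba mulrC.
rewrite -RintegralB //; try exact: cont_int.
apply: le_trans (le_normr_Rintegral _ _) _ => //.
  apply: cont_int => x; apply: continuousB; [exact: cf | exact: cc].
apply: (@le_trans _ _ (\int[mu]_(t in `[a, b]) (LH * m ^+ 3 * (t - a)))).
  apply: le_Rintegral => //.
  - apply: cont_int => x.
    have h1 : {for x, continuous (fun t => fseg n t - c)}.
      by apply: continuousB; [exact: cf | exact: cc].
    exact: (continuous_comp h1 (@norm_continuous _ _ _)).
  - apply: cont_int => x.
    have h2 : {for x, continuous (fun t : R => t - a)}.
      by apply: continuousB; [exact: cvg_id | exact: cvg_cst].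
    have h3 : {for x, continuous (fun _ : R => LH * m ^+ 3)} by exact: cvg_cst.
    have := continuousM h3 h2; exact.
  - move=> x; rewrite /= in_itv /= => /andP[ax xb].
    rewrite /c /fseg.
    have {2}-> : gp n = gp n + (a - a) *: beta N gp n by rewrite subrr scale0r addr0.
    apply: le_trans (quad_lip _ _ _) _.
    have -> : gp n + (x - a) *: beta N gp n - (gp n + (a - a) *: beta N gp n)
       = (x - a) *: beta N gp n.
      by apply/matrixP => i j; rewrite !mxE; ring.
    rewrite norm2Z ger0_norm ?subr_ge0 // -/m.
    by rewrite le_eqVlt; apply/orP; left; apply/eqP; ring.
rewrite RintegralZl //; last first.
  apply: cont_int => x.
  have h2 : {for x, continuous (fun t : R => t - a)}.
    by apply: continuousB; [exact: cvg_id | exact: cvg_cst].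
  exact: h2.
by rewrite int_lin // ba.
Qed.


Lemma int_prefix k : (k <= N)%N ->
  mu.-integrable `[0, tn R N k] (EFin \o Fint) /\
  \int[mu]_(t in `[0, tn R N k]) Fint t =
  \sum_(0 <= n < k) \int[mu]_(t in `[tn R N n, tn R N n.+1]) fseg n t.
Proof.
elim: k => [|k IH] hk.
  have -> : tn R N 0 = 0 by rewrite /tn mul0r.
  rewrite big_nil set_itv1; split; [exact: integrable1 | exact: Rintegral_set1].
have [i1 e1] := IH (ltnW hk).
have [i2 e2] := seg_int hk.
have t0 : 0 <= tn R N k by rewrite /tn divr_ge0.
have tk : tn R N k < tn R N k.+1 by exact: tn_lt.
have E : `[0, tn R N k.+1]%classic =
   `[0, tn R N k]%classic `|` `]tn R N k, tn R N k.+1]%classic.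
  by rewrite (@itv_bndbnd_setU _ _ (BLeft 0) (BRight (tn R N k))) // bnd_simp // ltW.
have dj : [disjoint `[0, tn R N k]%classic & `]tn R N k, tn R N k.+1]%classic].
  rewrite /disj_set; apply/eqP/seteqP; split => x //= [].
  rewrite !in_itv /= => /andP[_ h1] /andP[h2 _].
  by have := lt_le_trans h2 h1; rewrite ltxx.
rewrite E; split; first exact: integrableU.
rewrite Rintegral_setU //; last exact: integrableU.
by rewrite e1 e2 big_nat_recr.
Qed.

End Core2.

Lemma final_alg (R : realType) (N : nat) (m : nat -> R) (LH : R) : (0 < N)%N ->
  (forall n, 0 <= m n) -> (forall n, (n < N)%N -> 0 <= LH * m n ^+ 3) ->
  \sum_(0 <= n < N) LH * m n ^+ 3 * (N%:R^-1 ^+ 2 / 2) <=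
  LH * Num.sqrt (N%:R^-1 * \sum_(0 <= n < N) m n ^+ 2) ^+ 3 / (2 * Num.sqrt N%:R).
Proof.
move=> N0 m0 pos.
set S := \sum_(0 <= n < N) m n ^+ 2.
have S0 : 0 <= S by apply: sumr_ge0 => i _; exact: sqr_ge0.
have Np : 0 < N%:R :> R by rewrite ltr0n.
set h := N%:R^-1 ^+ 2 / 2 : R.
have h0 : 0 <= h by rewrite /h divr_ge0 // exprn_ge0 // invr_ge0 ltW.
apply: (@le_trans _ _ (\sum_(0 <= n < N) LH * Num.sqrt S * m n ^+ 2 * h)).
  apply: ler_sum_nat => i /= iN.
  rewrite ler_wpM2r //.
  have mS : m i <= Num.sqrt S.
    rewrite -(ger0_norm (m0 i)) -sqrtr_sqr; apply: ler_wsqrtr.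
    rewrite /S (bigD1_seq i) /= ?mem_index_iota ?iN ?iota_uniq //.
    rewrite lerDl; apply: sumr_ge0 => j _; exact: sqr_ge0.
  have [LH0|LHn] := leP 0 LH.
    have -> : LH * m i ^+ 3 = (LH * m i ^+ 2) * m i by ring.
    have -> : LH * Num.sqrt S * m i ^+ 2 = (LH * m i ^+ 2) * Num.sqrt S by ring.
    by rewrite ler_wpM2l // mulr_ge0 // sqr_ge0.
  have le0 : LH * m i ^+ 3 <= 0.
    by rewrite mulr_le0_ge0 ?(ltW LHn) ?exprn_ge0.
  have : LH * m i ^+ 3 = 0 by apply/eqP; rewrite eq_le le0 pos.
  move/eqP; rewrite mulf_eq0 (negbTE (ltr0_neq0 LHn)) expf_eq0 /= => /eqP ->.
  by rewrite expr0n /= !mulr0 expr0n /= mulr0.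
rewrite -big_distrl /= -big_distrr /= -/S.
rewrite le_eqVlt; apply/orP; left; apply/eqP.
rewrite sqrtrM ?invr_ge0 ?(ltW Np) // sqrtrV ?(ltW Np) //.
set q := Num.sqrt N%:R; set r := Num.sqrt S.
have q0 : 0 < q by rewrite sqrtr_gt0.
have Nq : N%:R = q ^+ 2 by rewrite sqr_sqrtr // ltW.
have Sr : S = r ^+ 2 by rewrite sqr_sqrtr.
rewrite /h Nq Sr; field.
by rewrite gt_eqF.
Qed.

Unset Implicit Arguments. Set Strict Implicit.

Theorem proposition8p2 (R : realType) (D : nat) (H : 'cV[R]_D -> 'M[R]_D) (LH : R)
  (Hsym : forall x, (H x)^T = H x)
  (Hpd : forall x u, u != 0 -> 0 < quadform (H x) u)
  (Hdiff : forall x v, derivable H x v)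
  (HC1 : forall v, continuous (fun x => 'D_v H x))
  (HLip : forall x y, opnorm (H x - H y) <= LH * norm2 (x - y))
  (N : nat) (HN : (1 <= N)%N) (gp : nat -> 'cV[R]_D) :
  let K3 := Num.sqrt (N%:R^-1 * \sum_(0 <= n < N) norm2 (beta N gp n) ^+ 2) in
  `| energy H (gpl N gp) - energy_l H N gp |
    <= LH * K3 ^+ 3 / (2 * Num.sqrt N%:R).
Proof.
cbv zeta.
have N0 : (0 < N)%N by [].
have tN : tn R N N = 1 by rewrite /tn divff // pnatr_eq0 -lt0n.
have -> : energy H (gpl N gp) =
    \int[lebesgue_measure]_(t in `[0, tn R N N]) Fint N gp H t.
  by rewrite tN.
have [_ ->] := int_prefix gp HLip N0 (leqnn N).
rewrite /energy_l mulr_sumr -sumrB.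
apply: le_trans (ler_norm_sum _ _ _) _.
apply: (@le_trans _ _ (\sum_(0 <= n < N)
   LH * norm2 (beta N gp n) ^+ 3 * (N%:R^-1 ^+ 2 / 2))).
  apply: ler_sum_nat => i /= iN.
  exact: (seg_bound gp HLip N0 iN).
apply: final_alg => //.
  move=> n; exact: norm2_ge0.
move=> n nN.
have := le_trans (normr_ge0 _) (seg_bound gp HLip N0 nN).
rewrite pmulr_lge0 //.
by rewrite divr_gt0 // exprn_gt0 // invr_gt0 ltr0n.
Qed.
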